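(* Let $G$ be a graph with edge weights $w(e)\ge 1$, let $\alpha>1$ and $r\in[0,1)$, and let levels, rounded weights $w_r$, level matchings $M_l$, the combined matching $\hat{M}$ and the sets $\mathcal{R}(e)$ be as defined below. Then for every $e\in\hat{M}$, $$\Phi(e)\le\frac{\alpha+1}{\alpha-1}\,w_r(e),$$ where $\Phi(e)=\sum_{e'\in\mathcal{R}(e)}w_r(e')$.
   Context: An edge $e$ is assigned to level $l\in\mathbb{Z}$ if $w(e)\in[\alpha^{l+r},\alpha^{l+r+1})$, and its rounded weight is $w_r(e)=\alpha^{l+r}$. For each level $l$, $M_l$ is a matching consisting of edges of level $l$. The combined matching $\hat{M}$ is produced by the greedy process: start with $\hat{M}=\emptyset$; for $l$ from the maximum level down to the minimum level, add all (remaining) edges of $M_l$ to $\hat{M}$, and for each $(u,v)\in M_l$ remove all edges incident to $u$ or $v$ from every $M_{l'}$ with $l'<l$. For $e=(u,v)\in\hat{M}$ lying on level $l$, $\mathcal{R}(e)=\{e\}\cup\{(x,y)\in M_{l'}: l'<l,\ \{x,y\}\cap\{u,v\}\neq\emptyset\}$ (here $M_{l'}$ refers to the level matchings before removals). *)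

(* Defs.v *)
From HB Require Import structures.
From mathcomp Require Import all_boot all_order all_algebra.
From mathcomp Require Import reals exp.
Set Implicit Arguments. Unset Strict Implicit. Unset Printing Implicit Defensive.
Import Order.TTheory GRing.Theory Num.Theory.
Local Open Scope ring_scope.

(* A graph on a finite vertex type V: edges are 2-element vertex sets.        *)
Definition share (V : finType) (e f : {set V}) : bool := ~~ [disjoint e & f].

Definition is_matching (V : finType) (M : {set {set V}}) : Prop :=
  forall e f, e \in M -> f \in M -> e != f -> [disjoint e & f].

Definition wround (R : realType) (V : finType) (alpha r : R)
  (lev : {set V} -> int) (e : {set V}) : R :=
  powR alpha ((lev e)%:~R + r).

Definition greedy_step (V : finType) (M : int -> {set {set V}})
  (S : {set {set V}}) (l : int) : {set {set V}} :=
  S :|: [set e in M l | [forall f in S, ~~ share e f]].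

(* The combined matching hat M: process levels from the maximum down to the
   minimum (only levels of edges of the graph can carry non-empty M_l). *)
Definition Mhat (V : finType) (Eset : {set {set V}}) (lev : {set V} -> int)
  (M : int -> {set {set V}}) : {set {set V}} :=
  foldl (greedy_step M) set0
    (sort (fun a b : int => b <= a) (undup [seq lev e | e <- enum Eset])).

(* R(e) = {e} u {f in M_{l'} : l' < lev e, f shares an endpoint with e}.
   (Edges of M_{l'} have level l', so f \in M_{l'} with l' < lev e is
   written as f \in M (lev f) with lev f < lev e.) *)
Definition Rset (V : finType) (lev : {set V} -> int)
  (M : int -> {set {set V}}) (e : {set V}) : {set {set V}} :=
  [set f | (f == e) || [&& lev f < lev e, f \in M (lev f) & share e f]].

Definition Phi (R : realType) (V : finType) (alpha r : R)
  (lev : {set V} -> int) (M : int -> {set {set V}}) (e : {set V}) : R :=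
  \sum_(f in Rset lev M e) wround alpha r lev f.

(* Main.v *)
Require Import Defs.
From HB Require Import structures.
From mathcomp Require Import all_boot all_order all_algebra.
From mathcomp Require Import reals exp.
From mathcomp Require Import zify ring lra.
Import Order.TTheory GRing.Theory Num.Theory.
Local Open Scope ring_scope.

Lemma foldl_inv (V : finType) (M : int -> {set {set V}}) (s : seq int) S x :
  x \in foldl (greedy_step M) S s -> x \in S \/ exists l, x \in M l.
Proof.
elim: s S => [|a s IH] S /=; first by left.
move=> /IH [|]; last by right.
rewrite /greedy_step inE => /orP[]; first by left.
by rewrite inE => /andP[h _]; right; exists a.
Qed.

Arguments foldl_inv {V M s S x}.

Lemma absz_pos (a b : int) : b < a -> (`|a - b|%N : int) = a - b.
Proof. move=> h; lia. Qed.

Lemma geom_sum (R : realType) (x : R) (N : nat) : 0 < x < 1 ->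
  \sum_(i < N) x ^+ i.+1 = (x - x ^+ N.+1) / (1 - x).
Proof.
move=> /andP[x0 x1]; have hx : 1 - x != 0 by rewrite subr_eq0 gt_eqF.
elim: N => [|N IH]; first by rewrite big_ord0 expr1 subrr mul0r.
rewrite big_ord_recr /= IH; apply/eqP; rewrite eq_sym -subr_eq0; apply/eqP.
rewrite !exprS; field; exact: hx.
Qed.

Theorem lemma6 (R : realType) (V : finType) (Eset : {set {set V}})
  (w : {set V} -> R) (alpha r : R) (lev : {set V} -> int)
  (M : int -> {set {set V}}) :
  (forall e, e \in Eset -> #|e| = 2%N) ->
  (forall e, e \in Eset -> 1 <= w e) ->
  1 < alpha -> 0 <= r -> r < 1 ->
  (* lev e is the level of e: w(e) in [alpha^(l+r), alpha^(l+r+1)) *)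
  (forall e, e \in Eset ->
     powR alpha ((lev e)%:~R + r) <= w e < powR alpha ((lev e)%:~R + r + 1)) ->
  (* M_l is a matching consisting of edges of level l *)
  (forall l, M l \subset Eset) ->
  (forall l e, e \in M l -> lev e = l) ->
  (forall l, is_matching (M l)) ->
  forall e, e \in Mhat Eset lev M ->
    Phi alpha r lev M e <= (alpha + 1) / (alpha - 1) * wround alpha r lev e.
Proof.
move=> Hcard Hw Ha Hr0 Hr1 Hlev HME HMl HMm e He.
have [|[l0 el0]] := foldl_inv He; first by rewrite inE.
have eE : e \in Eset by apply: (subsetP (HME l0)).
have [u [v [uv defe]]] := cards2P _ (introT eqP (Hcard e eE)).
set W := wround alpha r lev.
set S := [set f | [&& lev f < lev e, f \in M (lev f) & share e f]].
have a0 : 0 < alpha by lra.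
have W0 : 0 < W e by apply: powR_gt0.
pose k f := `|lev e - lev f|%N.
pose j f := (k f).-1.
pose x := alpha^-1.
have x0 : 0 < x by rewrite invr_gt0.
have x1 : x < 1 by rewrite invf_lt1.
have WS : forall f, f \in S -> W f = W e * x ^+ (j f).+1.
  move=> f; rewrite inE => /andP[lt _].
  have kj : (j f).+1 = k f by rewrite /j /k; lia.
  have : (lev e)%:~R + r = ((lev f)%:~R + r) + (k f)%:R :> R.
    rewrite /k [X in _ = _ + X]pmulrn.
    have -> : (`|lev e - lev f|%N : int) = lev e - lev f by lia.
    rewrite rmorphB /=; ring.
  rewrite /W /wround => ->; rewrite (@powRD _ alpha ((lev f)%:~R + r) (k f)%:R); last by apply/implyP=> _; rewrite gt_eqF.
  rewrite powR_mulrn ?ltW // kj /x exprVn mulrK //; exact/unitf_gt0/exprn_gt0.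
pose N := \max_(f in S) (j f).+1.
have jN : forall f, f \in S -> (j f < N)%N.
  by move=> f fS; rewrite /N; apply: leq_bigmax_cond.
have fib : forall i, (#|[set f in S | j f == i]| <= 2)%N.
  move=> i.
  pose Fu := [set f in S | (j f == i) && (u \in f)].
  pose Fv := [set f in S | (j f == i) && (v \in f)].
  have sub : [set f in S | j f == i] \subset Fu :|: Fv.
    apply/subsetP => f; rewrite !inE => /andP[fS ji]; rewrite fS ji /=.
    move: fS => /and3P[_ _ sh].
    move: sh; rewrite /share => /negP; apply: contra_notT => /norP[nu nv].
    rewrite disjoint_subset; apply/subsetP => y; rewrite defe !inE => /orP[]/eqP->.
      exact: nu. exact: nv.
  have le1 : forall (t : V), (#|[set f in S | (j f == i) && (t \in f)]| <= 1)%N.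
    move=> t; apply/card_le1P => f; rewrite !inE => /andP[fS /andP[fi tf]] g.
    rewrite !inE; apply/idP/idP; last by move/eqP->; rewrite fS fi tf.
    move=> /andP[gS /andP[gi tg]]; apply/eqP.
    move: fS gS => /and3P[lf mf _] /and3P[lg mg _].
    have ll : lev f = lev g.
      have kf : (0 < k f)%N by rewrite /k absz_gt0 subr_eq0 gt_eqF.
      have kg : (0 < k g)%N by rewrite /k absz_gt0 subr_eq0 gt_eqF.
      have kfg : k f = k g.
        by rewrite -(prednK kf) -(prednK kg); move: fi gi; rewrite /j => /eqP -> /eqP ->.
      have hf : ((k f)%:Z = lev e - lev f) by rewrite /k absz_pos.
      have hg : ((k g)%:Z = lev e - lev g) by rewrite /k absz_pos.
      by move: hf; rewrite kfg hg => /eqP; rewrite (inj_eq (addrI _)) => /eqP/oppr_inj.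
    case: (eqVneq g f) => // ngf.
    rewrite ll in mf; by move: (disjointFr (HMm _ _ _ mg mf ngf) tg); rewrite tf.
  apply: (leq_trans (subset_leq_card sub)); apply: (leq_trans (leq_card_setU _ _)).
  exact: (leq_add (le1 u) (le1 v)).
have eR : e \in Rset lev M e by rewrite inE eqxx.
rewrite /Phi (bigD1 e eR) /=.
have -> : \sum_(i in Rset lev M e | i != e) wround alpha r lev i =
          \sum_(f in S) W f.
  apply: eq_bigl => f; rewrite !inE; case: (eqVneq f e) => [->|_] /=.
    by rewrite ltxx. by rewrite andbT.
rewrite (eq_bigr _ WS).
rewrite (partition_big (fun f => inord (j f) : 'I_N.+1) xpredT) //=.
apply: (le_trans (y := W e + \sum_(i < N.+1) (W e * x ^+ i.+1) *+ 2)).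
  rewrite lerD2l; apply: ler_sum => i _.
  rewrite (eq_bigr (fun _ => W e * x ^+ i.+1)); last first.
    move=> f /andP[fS /eqP <-]; rewrite inordK // ltnS; exact: ltnW (jN f fS).
  rewrite sumr_const; apply: ler_wpMn2l.
    by rewrite mulr_ge0 ?exprn_ge0 ?ltW.
  apply: leq_trans (fib i); apply: subset_leq_card; apply/subsetP => f.
  move=> /andP[fS /eqP <-]; rewrite inE fS /= inordK // ltnS; exact: ltnW (jN f fS).
rewrite sumrMnl -mulr_sumr geom_sum; last by rewrite x0 x1.
have eqx : (alpha+1)/(alpha-1) = 1 + 2 * (x/(1-x)).
  rewrite /x; field.
  by rewrite gt_eqF // subr_eq0 gt_eqF.
have le : (x - x^+N.+2)/(1-x) <= x/(1-x).
  apply: ler_wpM2r; first by rewrite invr_ge0 subr_ge0 ltW.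
  by rewrite gerDl oppr_le0 exprn_ge0 // ltW.
have h := ler_wpM2l (ltW W0) le.
rewrite eqx mulr2n -/(W e).
move: h; set A := (_ - _) / _; set B := x / _ => h.
have -> : (1 + 2 * B) * W e = W e + (W e * B + W e * B) by ring.
rewrite lerD2l; exact: lerD.
Qed.
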